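(* Let $(\mathfrak{d},\mathfrak{d}_2)$ be a derivation scheme, consisting of a category $C$, a set $\mathfrak{d}_2$, and two functors $\mathfrak{d}(d^0),\mathfrak{d}(d^1)\colon \mathfrak{d}_2\times\mathsf{2}\to C$ that agree on objects. Then the $2$-category $\mathcal{F}_{2\text{-}\mathrm{Der}}(\mathfrak{d})$ freely generated by $(\mathfrak{d},\mathfrak{d}_2)$ is isomorphic to the coinserter, computed in the $2$-category $2\mathbf{Cat}$, of the parallel pair of $2$-functors $\mathfrak{d}(d^1),\mathfrak{d}(d^0)\colon \mathfrak{d}_2\times\mathsf{2}\rightrightarrows C$. Here the categories $\mathfrak{d}_2\times\mathsf{2}$ and $C$ are regarded as locally discrete $2$-categories. Moreover, this construction gives a functor $\mathcal{F}_{2\text{-}\mathrm{Der}}$ from derivation schemes to $2$-categories.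
   Context: Let $\mathsf{2}$ denote the category $0\to 1$. The set $\mathfrak{d}_2$ is regarded as a discrete category. A derivation scheme consists of a category $C$, a set $\mathfrak{d}_2$, and functors $\mathfrak{d}(d^0),\mathfrak{d}(d^1)\colon\mathfrak{d}_2\times\mathsf{2}\to C$ such that $\mathfrak{d}(d^0)(\alpha,i)=\mathfrak{d}(d^1)(\alpha,i)$ for every $\alpha\in\mathfrak{d}_2$ and $i\in\{0,1\}$. Thus each $\alpha$ determines parallel morphisms $s_\alpha=\mathfrak{d}(d^1)(\alpha,0\to1)$ and $t_\alpha=\mathfrak{d}(d^0)(\alpha,0\to1)$ of $C$. Morphisms of derivation schemes are the evident commuting maps. The free $2$-category $\mathcal{F}_{2\text{-}\mathrm{Der}}(\mathfrak{d})$ is characterised by the following universal property. A $2$-functor $\mathcal{F}_{2\text{-}\mathrm{Der}}(\mathfrak{d})\to X$ corresponds bijectively to a pair consisting of - a functor $G_1\colon C\to X$ (into the underlying category of $X$), and - a family of $2$-cells $G_2(\alpha)\colon G_1(s_\alpha)\Rightarrow G_1(t_\alpha)$ in $X$, one for each $\alpha\in\mathfrak{d}_2$. Let $F,G\colon A\to B$ be $2$-functors that agree on objects. An icon $\theta\colon F\Rightarrow G$ is a family of $2$-cells $\theta_f\colon Ff\Rightarrow Gf$, one for each $1$-cell $f$ of $A$, satisfying three conditions: - $\theta_{\mathrm{id}}=\mathrm{id}$; - $\theta_{g f}=\theta_g*\theta_f$ (horizontal composition); - $G\sigma\cdot\theta_f=\theta_{f'}\cdot F\sigma$ for every $2$-cell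 $\sigma\colon f\Rightarrow f'$. $2\mathbf{Cat}$ is the $2$-category whose objects are $2$-categories, whose $1$-cells are $2$-functors, and whose $2$-cells are icons. Let $P,Q\colon A\rightrightarrows B$ be $1$-cells in a $2$-category $\mathcal{K}$. Their coinserter is an object $L$ equipped with a $1$-cell $q\colon B\to L$ and a $2$-cell $\lambda\colon qP\Rightarrow qQ$, such that for every object $X$, composition with $(q,\lambda)$ induces an isomorphism of categories from $\mathcal{K}(L,X)$ to the category described as follows: - objects are pairs $(r\colon B\to X,\ \rho\colon rP\Rightarrow rQ)$; - morphisms are $2$-cells $\tau\colon r\Rightarrow r'$ with $\rho'\cdot(\tau P)=(\tau Q)\cdot\rho$. *)

(* Defs.v *)
(* Categories and strict 2-categories are presented "globularly" (unindexed):
   one type of objects, one type of 1-cells, one type of 2-cells, with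
   source/target maps and total composition operations whose laws are only
   required on composable data. *)

Record Category := {
  cOb : Type; cHom : Type;
  cdom : cHom -> cOb; ccod : cHom -> cOb;
  cid : cOb -> cHom; ccomp : cHom -> cHom -> cHom;  (* ccomp g f = g o f *)
  cdom_id : forall x, cdom (cid x) = x;
  ccod_id : forall x, ccod (cid x) = x;
  cdom_comp : forall g f, ccod f = cdom g -> cdom (ccomp g f) = cdom f;
  ccod_comp : forall g f, ccod f = cdom g -> ccod (ccomp g f) = ccod g;
  ccomp_assoc : forall h g f, ccod f = cdom g -> ccod g = cdom h ->
      ccomp h (ccomp g f) = ccomp (ccomp h g) f;
  ccomp_idl : forall f, ccomp (cid (ccod f)) f = f;
  ccomp_idr : forall f, ccomp f (cid (cdom f)) = f }.

Record FunData (C D : Category) := {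
  fo : cOb C -> cOb D; fa : cHom C -> cHom D }.
Arguments fo {C D} _ _.
Arguments fa {C D} _ _.

Definition is_functor {C D : Category} (F : FunData C D) : Prop :=
  (forall f, cdom D (fa F f) = fo F (cdom C f)) /\
  (forall f, ccod D (fa F f) = fo F (ccod C f)) /\
  (forall x, fa F (cid C x) = cid D (fo F x)) /\
  (forall g f, ccod C f = cdom C g -> fa F (ccomp C g f) = ccomp D (fa F g) (fa F f)).

Definition fcomp {C D E : Category} (G : FunData D E) (F : FunData C D) : FunData C E :=
  {| fo := fun x => fo G (fo F x); fa := fun f => fa G (fa F f) |}.

Definition fid (C : Category) : FunData C C := {| fo := fun x => x; fa := fun f => f |}.

Record TwoCat := {
  Ob : Type; Hom : Type; Cell : Type;
  dom1 : Hom -> Ob; cod1 : Hom -> Ob;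
  dom2 : Cell -> Hom; cod2 : Cell -> Hom;
  id1 : Ob -> Hom; comp1 : Hom -> Hom -> Hom;          (* comp1 g f = g o f *)
  id2 : Hom -> Cell;
  vcomp : Cell -> Cell -> Cell;                          (* vcomp b a = b . a *)
  hcomp : Cell -> Cell -> Cell;                          (* hcomp b a = b * a *)
  dom1_id1 : forall x, dom1 (id1 x) = x;
  cod1_id1 : forall x, cod1 (id1 x) = x;
  dom1_comp1 : forall g f, cod1 f = dom1 g -> dom1 (comp1 g f) = dom1 f;
  cod1_comp1 : forall g f, cod1 f = dom1 g -> cod1 (comp1 g f) = cod1 g;
  comp1_assoc : forall h g f, cod1 f = dom1 g -> cod1 g = dom1 h ->
      comp1 h (comp1 g f) = comp1 (comp1 h g) f;
  comp1_idl : forall f, comp1 (id1 (cod1 f)) f = f;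
  comp1_idr : forall f, comp1 f (id1 (dom1 f)) = f;
  dom1_cell : forall a, dom1 (dom2 a) = dom1 (cod2 a);
  cod1_cell : forall a, cod1 (dom2 a) = cod1 (cod2 a);
  dom2_id2 : forall f, dom2 (id2 f) = f;
  cod2_id2 : forall f, cod2 (id2 f) = f;
  dom2_vcomp : forall b a, cod2 a = dom2 b -> dom2 (vcomp b a) = dom2 a;
  cod2_vcomp : forall b a, cod2 a = dom2 b -> cod2 (vcomp b a) = cod2 b;
  vcomp_assoc : forall c b a, cod2 a = dom2 b -> cod2 b = dom2 c ->
      vcomp c (vcomp b a) = vcomp (vcomp c b) a;
  vcomp_idl : forall a, vcomp (id2 (cod2 a)) a = a;
  vcomp_idr : forall a, vcomp a (id2 (dom2 a)) = a;
  dom2_hcomp : forall b a, cod1 (dom2 a) = dom1 (dom2 b) ->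
      dom2 (hcomp b a) = comp1 (dom2 b) (dom2 a);
  cod2_hcomp : forall b a, cod1 (dom2 a) = dom1 (dom2 b) ->
      cod2 (hcomp b a) = comp1 (cod2 b) (cod2 a);
  hcomp_assoc : forall c b a, cod1 (dom2 a) = dom1 (dom2 b) ->
      cod1 (dom2 b) = dom1 (dom2 c) -> hcomp c (hcomp b a) = hcomp (hcomp c b) a;
  hcomp_idl : forall a, hcomp (id2 (id1 (cod1 (dom2 a)))) a = a;
  hcomp_idr : forall a, hcomp a (id2 (id1 (dom1 (dom2 a)))) = a;
  hcomp_id2 : forall g f, cod1 f = dom1 g -> hcomp (id2 g) (id2 f) = id2 (comp1 g f);
  interchange : forall b' b a' a, cod2 a = dom2 a' -> cod2 b = dom2 b' ->
      cod1 (dom2 a) = dom1 (dom2 b) ->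
      hcomp (vcomp b' b) (vcomp a' a) = vcomp (hcomp b' a') (hcomp b a) }.

Arguments dom1 {t} _. Arguments cod1 {t} _. Arguments dom2 {t} _. Arguments cod2 {t} _.
Arguments id1 {t} _. Arguments comp1 {t} _ _. Arguments id2 {t} _.
Arguments vcomp {t} _ _. Arguments hcomp {t} _ _.

Definition U (X : TwoCat) : Category :=
  {| cOb := Ob X; cHom := Hom X; cdom := @dom1 X; ccod := @cod1 X;
     cid := @id1 X; ccomp := @comp1 X;
     cdom_id := dom1_id1 X; ccod_id := cod1_id1 X;
     cdom_comp := dom1_comp1 X; ccod_comp := cod1_comp1 X;
     ccomp_assoc := comp1_assoc X; ccomp_idl := comp1_idl X; ccomp_idr := comp1_idr X |}.

Record TwoFunData (A B : TwoCat) := {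
  F0 : Ob A -> Ob B; F1 : Hom A -> Hom B; F2 : Cell A -> Cell B }.
Arguments F0 {A B} _ _. Arguments F1 {A B} _ _. Arguments F2 {A B} _ _.

Definition is_2functor {A B : TwoCat} (F : TwoFunData A B) : Prop :=
  (forall f, dom1 (F1 F f) = F0 F (dom1 f)) /\
  (forall f, cod1 (F1 F f) = F0 F (cod1 f)) /\
  (forall a, dom2 (F2 F a) = F1 F (dom2 a)) /\
  (forall a, cod2 (F2 F a) = F1 F (cod2 a)) /\
  (forall x, F1 F (id1 x) = id1 (F0 F x)) /\
  (forall g f, cod1 f = dom1 g -> F1 F (comp1 g f) = comp1 (F1 F g) (F1 F f)) /\
  (forall f, F2 F (id2 f) = id2 (F1 F f)) /\
  (forall b a, cod2 a = dom2 b -> F2 F (vcomp b a) = vcomp (F2 F b) (F2 F a)) /\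
  (forall b a, cod1 (dom2 a) = dom1 (dom2 b) ->
      F2 F (hcomp b a) = hcomp (F2 F b) (F2 F a)).

Definition tfcomp {A B C : TwoCat} (G : TwoFunData B C) (F : TwoFunData A B) : TwoFunData A C :=
  {| F0 := fun x => F0 G (F0 F x); F1 := fun f => F1 G (F1 F f);
     F2 := fun a => F2 G (F2 F a) |}.

Definition tfid (A : TwoCat) : TwoFunData A A :=
  {| F0 := fun x => x; F1 := fun f => f; F2 := fun a => a |}.

Definition Ufun {A B : TwoCat} (F : TwoFunData A B) : FunData (U A) (U B) :=
  Build_FunData (U A) (U B) (F0 F) (F1 F).

Definition is_icon {A B : TwoCat} (F G : TwoFunData A B) (th : Hom A -> Cell B) : Prop :=
  (forall x, F0 F x = F0 G x) /\
  (forall f, dom2 (th f) = F1 F f) /\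
  (forall f, cod2 (th f) = F1 G f) /\
  (forall x, th (id1 x) = id2 (F1 F (id1 x))) /\
  (forall g f, cod1 f = dom1 g -> th (comp1 g f) = hcomp (th g) (th f)) /\
  (forall s, vcomp (F2 G s) (th (dom2 s)) = vcomp (th (cod2 s)) (F2 F s)).

(* Coinserter of P, Q : A => B in 2Cat (objects: 2-categories, 1-cells:
   2-functors, 2-cells: icons).  Composition with (q, lam) induces an
   isomorphism of categories 2Cat(L, X) -> {(r, rho)}, expressed as
   bijective on objects and bijective on each hom-set. *)
Definition is_coinserter {A B : TwoCat} (P Q : TwoFunData A B)
    (L : TwoCat) (q : TwoFunData B L) (lam : Hom A -> Cell L) : Prop :=
  is_2functor q /\ is_icon (tfcomp q P) (tfcomp q Q) lam /\
  forall X : TwoCat,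
    (forall (r : TwoFunData B X) (rho : Hom A -> Cell X),
        is_2functor r -> is_icon (tfcomp r P) (tfcomp r Q) rho ->
        exists H : TwoFunData L X,
          is_2functor H /\ tfcomp H q = r /\ (forall f, F2 H (lam f) = rho f) /\
          (forall H' : TwoFunData L X, is_2functor H' -> tfcomp H' q = r ->
              (forall f, F2 H' (lam f) = rho f) -> H' = H)) /\
    (forall H H' : TwoFunData L X, is_2functor H -> is_2functor H' ->
        (forall t1 t2 : Hom L -> Cell X, is_icon H H' t1 -> is_icon H H' t2 ->
            (forall g, t1 (F1 q g) = t2 (F1 q g)) -> forall f, t1 f = t2 f) /\
        (forall t' : Hom B -> Cell X, is_icon (tfcomp H q) (tfcomp H' q) t' ->
            (forall f, vcomp (F2 H' (lam f)) (t' (F1 P f)) =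
                       vcomp (t' (F1 Q f)) (F2 H (lam f))) ->
            exists t : Hom L -> Cell X, is_icon H H' t /\
              forall g, t (F1 q g) = t' g)).

Section LD.
Variable C : Category.

Definition LD : TwoCat.
Proof.
  refine {| Ob := cOb C; Hom := cHom C; Cell := cHom C;
            dom1 := cdom C; cod1 := ccod C; dom2 := fun f => f; cod2 := fun f => f;
            id1 := cid C; comp1 := ccomp C; id2 := fun f => f;
            vcomp := fun b a => a; hcomp := ccomp C |};
  try solve [apply (cdom_id C) | apply (ccod_id C) | apply (cdom_comp C)
            | apply (ccod_comp C) | apply (ccomp_assoc C) | apply (ccomp_idl C)
            | apply (ccomp_idr C) | reflexivity
            | (simpl; intros; subst; reflexivity) | (simpl; intros; assumption)].
Defined.
End LD.

Definition LDfun {C D : Category} (F : FunData C D) : TwoFunData (LD C) (LD D) :=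
  Build_TwoFunData (LD C) (LD D) (fo F) (fa F) (fa F).

Inductive Arr2 := a00 | a01 | a11.  (* id_0, 0 -> 1, id_1 *)
Definition a2dom (a : Arr2) : bool := match a with a11 => true | _ => false end.
Definition a2cod (a : Arr2) : bool := match a with a00 => false | _ => true end.
Definition a2id (b : bool) : Arr2 := if b then a11 else a00.
Definition a2comp (g f : Arr2) : Arr2 :=
  match g with a01 => a01 | _ => f end.

Definition DerCat (S : Type) : Category.
Proof.
  refine {| cOb := S * bool; cHom := S * Arr2;
            cdom := fun p => (fst p, a2dom (snd p));
            ccod := fun p => (fst p, a2cod (snd p));
            cid := fun x => (fst x, a2id (snd x));
            ccomp := fun g f => (fst f, a2comp (snd g) (snd f)) |}.
  - intros [s []]; reflexivity.
  - intros [s []]; reflexivity.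
  - intros [t g] [s f] H; simpl in *; injection H; intros; subst;
      destruct g, f; simpl in *; try discriminate; reflexivity.
  - intros [t g] [s f] H; simpl in *; injection H; intros; subst;
      destruct g, f; simpl in *; try discriminate; reflexivity.
  - intros [u h] [t g] [s f] H1 H2; simpl in *; injection H1; injection H2; intros; subst;
      destruct h, g, f; simpl in *; try discriminate; reflexivity.
  - intros [s []]; reflexivity.
  - intros [s []]; reflexivity.
Defined.

Record DerScheme := {
  dC : Category;
  dS : Type;
  dd0 : FunData (DerCat dS) dC;
  dd1 : FunData (DerCat dS) dC;
  dd0_ok : is_functor dd0;
  dd1_ok : is_functor dd1;
  dd_agree : forall x, fo dd0 x = fo dd1 x }.

Definition sder (d : DerScheme) (al : dS d) : cHom (dC d) := fa (dd1 d) (al, a01).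
Definition tder (d : DerScheme) (al : dS d) : cHom (dC d) := fa (dd0 d) (al, a01).

Definition is_free (d : DerScheme) (L : TwoCat)
    (e : FunData (dC d) (U L)) (e2 : dS d -> Cell L) : Prop :=
  is_functor e /\
  (forall al, dom2 (e2 al) = fa e (sder d al) /\ cod2 (e2 al) = fa e (tder d al)) /\
  forall (X : TwoCat) (G1 : FunData (dC d) (U X)) (G2 : dS d -> Cell X),
    is_functor G1 ->
    (forall al, dom2 (G2 al) = fa G1 (sder d al) /\ cod2 (G2 al) = fa G1 (tder d al)) ->
    exists H : TwoFunData L X,
      is_2functor H /\ fcomp (Ufun H) e = G1 /\ (forall al, F2 H (e2 al) = G2 al) /\
      (forall H' : TwoFunData L X, is_2functor H' -> fcomp (Ufun H') e = G1 ->
          (forall al, F2 H' (e2 al) = G2 al) -> H' = H).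

Definition qof {C : Category} {L : TwoCat} (e : FunData C (U L)) : TwoFunData (LD C) L :=
  Build_TwoFunData (LD C) L (fo e) (fa e) (fun f => @id2 L (fa e f)).

Definition lamof (d : DerScheme) {L : TwoCat} (e : FunData (dC d) (U L))
    (e2 : dS d -> Cell L) : cHom (DerCat (dS d)) -> Cell L :=
  fun p => match snd p with
           | a01 => e2 (fst p)
           | _ => @id2 L (fa e (fa (dd1 d) p))
           end.

Definition times2 {S S' : Type} (k : S -> S') : FunData (DerCat S) (DerCat S') :=
  Build_FunData (DerCat S) (DerCat S') (fun x : S * bool => (k (fst x), snd x))
    (fun p : S * Arr2 => (k (fst p), snd p)).

Definition is_scheme_mor (d d' : DerScheme) (h : FunData (dC d) (dC d'))
    (k : dS d -> dS d') : Prop :=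
  is_functor h /\ fcomp h (dd0 d) = fcomp (dd0 d') (times2 k) /\
  fcomp h (dd1 d) = fcomp (dd1 d') (times2 k).

Definition is_over {d d' : DerScheme} {L L' : TwoCat}
    (e : FunData (dC d) (U L)) (e2 : dS d -> Cell L)
    (e' : FunData (dC d') (U L')) (e2' : dS d' -> Cell L')
    (G : TwoFunData L L') (h : FunData (dC d) (dC d')) (k : dS d -> dS d') : Prop :=
  fcomp (Ufun G) e = fcomp e' h /\ forall al, F2 G (e2 al) = e2' (k al).

(* Main.v *)
Require Import Defs.
From Stdlib Require Import ClassicalEpsilon ProofIrrelevance FunctionalExtensionality.

Section Icn.
Variable X : TwoCat.

Record ICell := mkI { ic1 : Cell X; ic2 : Cell X; icl : Cell X; icr : Cell X;
  ic_d : dom2 icl = dom2 ic1; ic_c : cod2 icl = dom2 ic2;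
  ic_d' : dom2 icr = cod2 ic1; ic_c' : cod2 icr = cod2 ic2;
  ic_sq : vcomp icr ic1 = vcomp ic2 icl }.

Lemma icell_eq (a b : ICell) : ic1 a = ic1 b -> ic2 a = ic2 b -> icl a = icl b ->
  icr a = icr b -> a = b.
Proof. destruct a, b; simpl; intros; subst; f_equal; apply proof_irrelevance. Qed.

Lemma hc_cond2 (a b : Cell X) : cod1 (dom2 a) = dom1 (dom2 b) -> cod1 (cod2 a) = dom1 (cod2 b).
Proof. intro E. rewrite <- (cod1_cell X a), <- (dom1_cell X b). exact E. Qed.

Lemma icl_d1 a : dom1 (dom2 (icl a)) = dom1 (dom2 (ic1 a)).
Proof. rewrite ic_d; reflexivity. Qed.
Lemma icl_c1 a : cod1 (dom2 (icl a)) = cod1 (dom2 (ic1 a)).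
Proof. rewrite ic_d; reflexivity. Qed.
Lemma ic2_d1 a : dom1 (dom2 (ic2 a)) = dom1 (dom2 (ic1 a)).
Proof. rewrite <- ic_c, <- (dom1_cell X), ic_d; reflexivity. Qed.
Lemma ic2_c1 a : cod1 (dom2 (ic2 a)) = cod1 (dom2 (ic1 a)).
Proof. rewrite <- ic_c, <- (cod1_cell X), ic_d; reflexivity. Qed.
Lemma icr_d1 a : dom1 (dom2 (icr a)) = dom1 (dom2 (ic1 a)).
Proof. rewrite ic_d', <- (dom1_cell X); reflexivity. Qed.
Lemma icr_c1 a : cod1 (dom2 (icr a)) = cod1 (dom2 (ic1 a)).
Proof. rewrite ic_d', <- (cod1_cell X); reflexivity. Qed.

Definition idI (t : Cell X) : ICell.
Proof.
  refine (mkI t t (id2 (dom2 t)) (id2 (cod2 t)) _ _ _ _ _).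
  - apply dom2_id2. - apply cod2_id2. - apply dom2_id2. - apply cod2_id2.
  - rewrite (vcomp_idl X), (vcomp_idr X); reflexivity.
Defined.

Lemma compl a b : ic2 a = ic1 b -> cod2 (icl a) = dom2 (icl b).
Proof. intro E; rewrite ic_c, E, ic_d; reflexivity. Qed.
Lemma compr a b : ic2 a = ic1 b -> cod2 (icr a) = dom2 (icr b).
Proof. intro E; rewrite ic_c', ic_d', E; reflexivity. Qed.

Definition mkV (b a : ICell) (E : ic2 a = ic1 b) : ICell.
Proof.
  refine (mkI (ic1 a) (ic2 b) (vcomp (icl b) (icl a)) (vcomp (icr b) (icr a)) _ _ _ _ _).
  - rewrite (dom2_vcomp X) by (apply compl; exact E). apply ic_d.
  - rewrite (cod2_vcomp X) by (apply compl; exact E). apply ic_c.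
  - rewrite (dom2_vcomp X) by (apply compr; exact E). apply ic_d'.
  - rewrite (cod2_vcomp X) by (apply compr; exact E). apply ic_c'.
  - rewrite <- (vcomp_assoc X (icr b) (icr a) (ic1 a)).
    2: { symmetry; apply ic_d'. }
    2: { apply compr; exact E. }
    rewrite (ic_sq a), E.
    rewrite (vcomp_assoc X (icr b) (ic1 b) (icl a)).
    2: { rewrite ic_c, E; reflexivity. }
    2: { symmetry; apply ic_d'. }
    rewrite (ic_sq b).
    rewrite <- (vcomp_assoc X).
    + reflexivity.
    + apply compl; exact E.
    + apply ic_c.
Defined.

Definition vcompI (b a : ICell) : ICell :=
  match excluded_middle_informative (ic2 a = ic1 b) with
  | left E => mkV b a E | right _ => a end.

Lemma vcompI_eq b a (E : ic2 a = ic1 b) : vcompI b a = mkV b a E.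
Proof.
  unfold vcompI. destruct (excluded_middle_informative _) as [E'|n].
  - f_equal; apply proof_irrelevance.
  - contradiction.
Qed.

Definition HC (a b : ICell) := cod1 (dom2 (ic1 a)) = dom1 (dom2 (ic1 b)).

Lemma cl a b : HC a b -> cod1 (dom2 (icl a)) = dom1 (dom2 (icl b)).
Proof. unfold HC; rewrite icl_c1, icl_d1; auto. Qed.
Lemma c2 a b : HC a b -> cod1 (dom2 (ic2 a)) = dom1 (dom2 (ic2 b)).
Proof. unfold HC; rewrite ic2_c1, ic2_d1; auto. Qed.
Lemma cr a b : HC a b -> cod1 (dom2 (icr a)) = dom1 (dom2 (icr b)).
Proof. unfold HC; rewrite icr_c1, icr_d1; auto. Qed.

Definition mkH (b a : ICell) (E : HC a b) : ICell.
Proof.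
  refine (mkI (hcomp (ic1 b) (ic1 a)) (hcomp (ic2 b) (ic2 a))
              (hcomp (icl b) (icl a)) (hcomp (icr b) (icr a)) _ _ _ _ _).
  - rewrite (dom2_hcomp X _ _ (cl a b E)), (dom2_hcomp X _ _ E), (ic_d a), (ic_d b); reflexivity.
  - rewrite (cod2_hcomp X _ _ (cl a b E)), (dom2_hcomp X _ _ (c2 a b E)), (ic_c a), (ic_c b); reflexivity.
  - rewrite (dom2_hcomp X _ _ (cr a b E)), (cod2_hcomp X _ _ E), (ic_d' a), (ic_d' b); reflexivity.
  - rewrite (cod2_hcomp X _ _ (cr a b E)), (cod2_hcomp X _ _ (c2 a b E)), (ic_c' a), (ic_c' b); reflexivity.
  - rewrite <- (interchange X (icr b) (ic1 b) (icr a) (ic1 a)).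
    + rewrite (ic_sq a), (ic_sq b).
      apply (interchange X).
      * apply ic_c. * apply ic_c. * apply cl; exact E.
    + symmetry; apply ic_d'.
    + symmetry; apply ic_d'.
    + exact E.
Defined.

Definition hcompI (b a : ICell) : ICell :=
  match excluded_middle_informative (HC a b) with
  | left E => mkH b a E | right _ => a end.

Lemma hcompI_eq b a (E : HC a b) : hcompI b a = mkH b a E.
Proof.
  unfold hcompI. destruct (excluded_middle_informative _) as [E'|n].
  - f_equal; apply proof_irrelevance.
  - contradiction.
Qed.

Lemma L_dom1_id1 (x : Ob X) : dom1 (dom2 (id2 (id1 x))) = x.
Proof. rewrite (dom2_id2 X), (dom1_id1 X); reflexivity. Qed.
Lemma L_cod1_id1 (x : Ob X) : cod1 (dom2 (id2 (id1 x))) = x.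
Proof. rewrite (dom2_id2 X), (cod1_id1 X); reflexivity. Qed.
Lemma L_dom1_comp1 (g f : Cell X) : cod1 (dom2 f) = dom1 (dom2 g) ->
  dom1 (dom2 (hcomp g f)) = dom1 (dom2 f).
Proof. intro E; rewrite (dom2_hcomp X _ _ E); apply (dom1_comp1 X); exact E. Qed.
Lemma L_cod1_comp1 (g f : Cell X) : cod1 (dom2 f) = dom1 (dom2 g) ->
  cod1 (dom2 (hcomp g f)) = cod1 (dom2 g).
Proof. intro E; rewrite (dom2_hcomp X _ _ E); apply (cod1_comp1 X); exact E. Qed.
Lemma L_dom1_cell a : dom1 (dom2 (ic1 a)) = dom1 (dom2 (ic2 a)).
Proof. rewrite ic2_d1; reflexivity. Qed.
Lemma L_cod1_cell a : cod1 (dom2 (ic1 a)) = cod1 (dom2 (ic2 a)).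
Proof. rewrite ic2_c1; reflexivity. Qed.
Lemma L_dom2_vcomp b a : ic2 a = ic1 b -> ic1 (vcompI b a) = ic1 a.
Proof. intro E; rewrite (vcompI_eq b a E); reflexivity. Qed.
Lemma L_cod2_vcomp b a : ic2 a = ic1 b -> ic2 (vcompI b a) = ic2 b.
Proof. intro E; rewrite (vcompI_eq b a E); reflexivity. Qed.
Lemma L_vcomp_assoc c b a : ic2 a = ic1 b -> ic2 b = ic1 c ->
  vcompI c (vcompI b a) = vcompI (vcompI c b) a.
Proof.
  intros E1 E2. rewrite (vcompI_eq b a E1), (vcompI_eq c b E2).
  rewrite (vcompI_eq c (mkV b a E1) E2), (vcompI_eq (mkV c b E2) a E1).
  apply icell_eq; simpl; try reflexivity.
  - apply (vcomp_assoc X); apply compl; assumption.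
  - apply (vcomp_assoc X); apply compr; assumption.
Qed.
Lemma L_vcomp_idl a : vcompI (idI (ic2 a)) a = a.
Proof.
  rewrite (vcompI_eq (idI (ic2 a)) a eq_refl).
  apply icell_eq; simpl; try reflexivity.
  - rewrite <- (ic_c a); apply (vcomp_idl X).
  - rewrite <- (ic_c' a); apply (vcomp_idl X).
Qed.
Lemma L_vcomp_idr a : vcompI a (idI (ic1 a)) = a.
Proof.
  rewrite (vcompI_eq a (idI (ic1 a)) eq_refl).
  apply icell_eq; simpl; try reflexivity.
  - rewrite <- (ic_d a); apply (vcomp_idr X).
  - rewrite <- (ic_d' a); apply (vcomp_idr X).
Qed.
Lemma L_dom2_hcomp b a : cod1 (dom2 (ic1 a)) = dom1 (dom2 (ic1 b)) ->
  ic1 (hcompI b a) = hcomp (ic1 b) (ic1 a).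
Proof. intro E; rewrite (hcompI_eq b a E); reflexivity. Qed.
Lemma L_cod2_hcomp b a : cod1 (dom2 (ic1 a)) = dom1 (dom2 (ic1 b)) ->
  ic2 (hcompI b a) = hcomp (ic2 b) (ic2 a).
Proof. intro E; rewrite (hcompI_eq b a E); reflexivity. Qed.
Lemma L_hcomp_assoc c b a : cod1 (dom2 (ic1 a)) = dom1 (dom2 (ic1 b)) ->
  cod1 (dom2 (ic1 b)) = dom1 (dom2 (ic1 c)) ->
  hcompI c (hcompI b a) = hcompI (hcompI c b) a.
Proof.
  intros E1 E2. rewrite (hcompI_eq b a E1), (hcompI_eq c b E2).
  assert (E3 : HC (mkH b a E1) c).
  { unfold HC; simpl. rewrite (L_cod1_comp1 _ _ E1). exact E2. }
  assert (E4 : HC a (mkH c b E2)).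
  { unfold HC; simpl. rewrite (L_dom1_comp1 _ _ E2). exact E1. }
  rewrite (hcompI_eq c _ E3), (hcompI_eq _ a E4).
  apply icell_eq; simpl.
  - apply (hcomp_assoc X); assumption.
  - apply (hcomp_assoc X); apply c2; assumption.
  - apply (hcomp_assoc X); apply cl; assumption.
  - apply (hcomp_assoc X); apply cr; assumption.
Qed.
Lemma L_hcomp_idl a : hcompI (idI (id2 (id1 (cod1 (dom2 (ic1 a)))))) a = a.
Proof.
  assert (E : HC a (idI (id2 (id1 (cod1 (dom2 (ic1 a))))))).
  { unfold HC; simpl. rewrite (dom2_id2 X), (dom1_id1 X); reflexivity. }
  rewrite (hcompI_eq _ a E).
  apply icell_eq; simpl.
  - apply (hcomp_idl X).
  - rewrite <- (ic2_c1 a); apply (hcomp_idl X).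
  - rewrite (dom2_id2 X), <- (icl_c1 a); apply (hcomp_idl X).
  - rewrite (cod2_id2 X), <- (icr_c1 a); apply (hcomp_idl X).
Qed.
Lemma L_hcomp_idr a : hcompI a (idI (id2 (id1 (dom1 (dom2 (ic1 a)))))) = a.
Proof.
  assert (E : HC (idI (id2 (id1 (dom1 (dom2 (ic1 a)))))) a).
  { unfold HC; simpl. rewrite (dom2_id2 X), (cod1_id1 X); reflexivity. }
  rewrite (hcompI_eq a _ E).
  apply icell_eq; simpl.
  - apply (hcomp_idr X).
  - rewrite <- (ic2_d1 a); apply (hcomp_idr X).
  - rewrite (dom2_id2 X), <- (icl_d1 a); apply (hcomp_idr X).
  - rewrite (cod2_id2 X), <- (icr_d1 a); apply (hcomp_idr X).
Qed.
Lemma L_hcomp_id2 (g f : Cell X) : cod1 (dom2 f) = dom1 (dom2 g) ->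
  hcompI (idI g) (idI f) = idI (hcomp g f).
Proof.
  intro E. rewrite (hcompI_eq (idI g) (idI f) E).
  apply icell_eq; simpl; try reflexivity.
  - rewrite (dom2_hcomp X _ _ E); apply (hcomp_id2 X); exact E.
  - rewrite (cod2_hcomp X _ _ E); apply (hcomp_id2 X); apply hc_cond2; exact E.
Qed.
Lemma L_interchange b' b a' a : ic2 a = ic1 a' -> ic2 b = ic1 b' ->
  cod1 (dom2 (ic1 a)) = dom1 (dom2 (ic1 b)) ->
  hcompI (vcompI b' b) (vcompI a' a) = vcompI (hcompI b' a') (hcompI b a).
Proof.
  intros Ea Eb E.
  rewrite (vcompI_eq b' b Eb), (vcompI_eq a' a Ea), (hcompI_eq b a E).
  assert (E' : HC a' b').
  { unfold HC. rewrite <- Ea, <- Eb, ic2_c1, ic2_d1; exact E. }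
  rewrite (hcompI_eq b' a' E').
  rewrite (hcompI_eq (mkV b' b Eb) (mkV a' a Ea) E).
  assert (E'' : ic2 (mkH b a E) = ic1 (mkH b' a' E')).
  { simpl. rewrite Ea, Eb; reflexivity. }
  rewrite (vcompI_eq _ _ E'').
  apply icell_eq; simpl; try reflexivity.
  - apply (interchange X).
    + apply compl; exact Ea. + apply compl; exact Eb. + apply cl; exact E.
  - apply (interchange X).
    + apply compr; exact Ea. + apply compr; exact Eb. + apply cr; exact E.
Qed.

Definition Icn : TwoCat :=
  {| Ob := Ob X; Hom := Cell X; Cell := ICell;
     dom1 := fun t => dom1 (dom2 t); cod1 := fun t => cod1 (dom2 t);
     dom2 := ic1; cod2 := ic2;
     id1 := fun x => id2 (id1 x); comp1 := hcomp; id2 := idI;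
     vcomp := vcompI; hcomp := hcompI;
     dom1_id1 := L_dom1_id1; cod1_id1 := L_cod1_id1;
     dom1_comp1 := L_dom1_comp1; cod1_comp1 := L_cod1_comp1;
     comp1_assoc := hcomp_assoc X; comp1_idl := hcomp_idl X; comp1_idr := hcomp_idr X;
     dom1_cell := L_dom1_cell; cod1_cell := L_cod1_cell;
     dom2_id2 := fun f => eq_refl; cod2_id2 := fun f => eq_refl;
     dom2_vcomp := L_dom2_vcomp; cod2_vcomp := L_cod2_vcomp;
     vcomp_assoc := L_vcomp_assoc; vcomp_idl := L_vcomp_idl; vcomp_idr := L_vcomp_idr;
     dom2_hcomp := L_dom2_hcomp; cod2_hcomp := L_cod2_hcomp;
     hcomp_assoc := L_hcomp_assoc; hcomp_idl := L_hcomp_idl; hcomp_idr := L_hcomp_idr;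
     hcomp_id2 := L_hcomp_id2; interchange := L_interchange |}.

Definition DI : TwoFunData Icn X := Build_TwoFunData Icn X (fun x => x) (fun t => dom2 t) icl.
Definition DI' : TwoFunData Icn X := Build_TwoFunData Icn X (fun x => x) (fun t => cod2 t) icr.

Lemma DI_2f : is_2functor DI.
Proof.
  repeat split; simpl; intros; try reflexivity.
  - apply ic_d. - apply ic_c. - apply (dom2_id2 X).
  - apply (dom2_hcomp X); assumption.
  - rewrite (vcompI_eq _ _ H); reflexivity.
  - rewrite (hcompI_eq _ _ H); reflexivity.
Qed.
Lemma DI'_2f : is_2functor DI'.
Proof.
  repeat split; simpl; intros; try reflexivity.
  - symmetry; apply (dom1_cell X). - symmetry; apply (cod1_cell X).
  - apply ic_d'. - apply ic_c'. - apply (cod2_id2 X).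
  - apply (cod2_hcomp X); assumption.
  - rewrite (vcompI_eq _ _ H); reflexivity.
  - rewrite (hcompI_eq _ _ H); reflexivity.
Qed.
End Icn.

Arguments ic1 {X} _. Arguments ic2 {X} _. Arguments icl {X} _. Arguments icr {X} _.

Lemma fd_ext {C D : Category} (F G : FunData C D) :
  (forall x, fo F x = fo G x) -> (forall f, fa F f = fa G f) -> F = G.
Proof. destruct F, G; simpl; intros; f_equal; apply functional_extensionality; auto. Qed.

Lemma tfd_ext {A B : TwoCat} (F G : TwoFunData A B) :
  (forall x, F0 F x = F0 G x) -> (forall f, F1 F f = F1 G f) -> (forall a, F2 F a = F2 G a) -> F = G.
Proof. destruct F, G; simpl; intros; f_equal; apply functional_extensionality; auto. Qed.

Lemma functor_comp {C D E : Category} (F : FunData C D) (G : FunData D E) :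
  is_functor F -> is_functor G -> is_functor (fcomp G F).
Proof.
  intros [f1 [f2 [f3 f4]]] [g1 [g2 [g3 g4]]]; repeat split; simpl; intros.
  - rewrite g1, f1; reflexivity.
  - rewrite g2, f2; reflexivity.
  - rewrite f3, g3; reflexivity.
  - rewrite f4 by assumption. apply g4. rewrite f2, f1; f_equal; assumption.
Qed.

Lemma twofunctor_comp {A B C : TwoCat} (F : TwoFunData A B) (G : TwoFunData B C) :
  is_2functor F -> is_2functor G -> is_2functor (tfcomp G F).
Proof.
  intros (f1&f2&f3&f4&f5&f6&f7&f8&f9) (g1&g2&g3&g4&g5&g6&g7&g8&g9); repeat split; simpl; intros.
  - rewrite g1, f1; reflexivity.
  - rewrite g2, f2; reflexivity.
  - rewrite g3, f3; reflexivity.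
  - rewrite g4, f4; reflexivity.
  - rewrite f5, g5; reflexivity.
  - rewrite f6 by assumption. apply g6. rewrite f2, f1; f_equal; assumption.
  - rewrite f7, g7; reflexivity.
  - rewrite f8 by assumption. apply g8. rewrite f4, f3; f_equal; assumption.
  - rewrite f9 by assumption. apply g9. rewrite !f3, f2, f1; f_equal; assumption.
Qed.

Lemma Ufun_functor {A B : TwoCat} (H : TwoFunData A B) : is_2functor H -> is_functor (Ufun H).
Proof.
  intros (h1&h2&h3&h4&h5&h6&h7&h8&h9); repeat split; simpl; intros.
  - apply h1. - apply h2. - apply h5. - apply h6; assumption.
Qed.

Lemma free_unique (d : DerScheme) (L : TwoCat) (e : FunData (dC d) (U L)) (e2 : dS d -> Cell L)
  (Hf : is_free d L e e2) (X : TwoCat) (H H' : TwoFunData L X) :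
  is_2functor H -> is_2functor H' -> fcomp (Ufun H) e = fcomp (Ufun H') e ->
  (forall al, F2 H (e2 al) = F2 H' (e2 al)) -> H = H'.
Proof.
  intros hH hH' E1 E2. destruct Hf as [He [Hd Hu]].
  destruct (Hu X (fcomp (Ufun H) e) (fun al => F2 H (e2 al))) as [H0 [_ [_ [_ U0]]]].
  - apply functor_comp; [exact He | apply Ufun_functor; exact hH].
  - intros al. destruct hH as (h1&h2&h3&h4&_). rewrite h3, h4, (proj1 (Hd al)), (proj2 (Hd al)).
    split; reflexivity.
  - rewrite (U0 H hH eq_refl (fun al => eq_refl)).
    symmetry; apply U0; auto.
Qed.

Section Lift.
Variables (L X : TwoCat) (H H' : TwoFunData L X) (t : Hom L -> Cell X).
Hypotheses (hH : is_2functor H) (hH' : is_2functor H') (I : is_icon H H' t).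

Definition liftcell (s : Cell L) : ICell X.
Proof.
  refine (mkI X (t (dom2 s)) (t (cod2 s)) (F2 H s) (F2 H' s) _ _ _ _ _);
  destruct hH as (h1&h2&h3&h4&_); destruct hH' as (k1&k2&k3&k4&_);
  destruct I as (i1&i2&i3&i4&i5&i6).
  - rewrite h3, i2; reflexivity.
  - rewrite h4, i2; reflexivity.
  - rewrite k3, i3; reflexivity.
  - rewrite k4, i3; reflexivity.
  - apply i6.
Defined.

Definition liftI : TwoFunData L (Icn X) := Build_TwoFunData L (Icn X) (F0 H) t liftcell.

Lemma liftI_2f : is_2functor liftI.
Proof.
  pose proof hH as (h1&h2&h3&h4&h5&h6&h7&h8&h9).
  pose proof hH' as (k1&k2&k3&k4&k5&k6&k7&k8&k9).
  pose proof I as (i1&i2&i3&i4&i5&i6).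
  repeat split; simpl; intros.
  - rewrite i2, h1; reflexivity.
  - rewrite i2, h2; reflexivity.
  - rewrite i4, h5; reflexivity.
  - apply i5; assumption.
  - apply icell_eq; simpl; rewrite ?(dom2_id2 L), ?(cod2_id2 L), ?h7, ?k7, ?i2, ?i3; reflexivity.
  - assert (E : ic2 (liftcell a) = ic1 (liftcell b)) by (simpl; rewrite H0; reflexivity).
    rewrite (vcompI_eq X _ _ E).
    apply icell_eq; simpl.
    + rewrite (dom2_vcomp L) by assumption; reflexivity.
    + rewrite (cod2_vcomp L) by assumption; reflexivity.
    + apply h8; assumption.
    + apply k8; assumption.
  - assert (E : HC X (liftcell a) (liftcell b)).
    { unfold HC; simpl. rewrite !i2, h2, h1, H0; reflexivity. }
    rewrite (hcompI_eq X _ _ E).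
    apply icell_eq; simpl.
    + rewrite (dom2_hcomp L) by assumption. apply i5; assumption.
    + rewrite (cod2_hcomp L) by assumption. apply i5. apply (hc_cond2 L); assumption.
    + apply h9; assumption.
    + apply k9; assumption.
Qed.
End Lift.

Lemma fo_eq {C D : Category} {F G : FunData C D} (E : F = G) x : fo F x = fo G x.
Proof. rewrite E; reflexivity. Qed.
Lemma fa_eq {C D : Category} {F G : FunData C D} (E : F = G) x : fa F x = fa G x.
Proof. rewrite E; reflexivity. Qed.

Lemma dd_id0 {S : Type} {C : Category} (F : FunData (DerCat S) C) :
  is_functor F -> forall s, fa F (s, a00) = cid C (fo F (s, false)).
Proof. intros [_ [_ [h3 _]]] s. exact (h3 (s, false)). Qed.
Lemma dd_id1 {S : Type} {C : Category} (F : FunData (DerCat S) C) :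
  is_functor F -> forall s, fa F (s, a11) = cid C (fo F (s, true)).
Proof. intros [_ [_ [h3 _]]] s. exact (h3 (s, true)). Qed.

Section Part1.
Variables (d : DerScheme) (L : TwoCat) (e : FunData (dC d) (U L)) (e2 : dS d -> Cell L).
Hypothesis Hf : is_free d L e e2.

Lemma q_2f : is_2functor (qof e).
Proof.
  destruct Hf as [[e1 [e2' [e3 e4]]] _].
  repeat split; simpl; intros.
  - apply e1. - apply e2'. - apply (dom2_id2 L). - apply (cod2_id2 L).
  - apply e3. - apply e4; assumption.
  - subst. pose proof (vcomp_idl L (id2 (fa e b))) as V. rewrite (cod2_id2 L) in V.
    symmetry; exact V.
  - rewrite e4 by assumption. symmetry; apply (hcomp_id2 L).
    change (cod1 (fa e a) = dom1 (fa e b)). transitivity (fo e (ccod _ a)); [exact (e2' a)|].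
    simpl in H; rewrite H. symmetry; exact (e1 b).
Qed.

Lemma lam_dom f : dom2 (lamof d e e2 f) = fa e (fa (dd1 d) f).
Proof.
  destruct Hf as [_ [Hd _]].
  destruct f as [s []]; simpl; try apply (dom2_id2 L). apply (proj1 (Hd s)).
Qed.
Lemma lam_cod f : cod2 (lamof d e e2 f) = fa e (fa (dd0 d) f).
Proof.
  destruct Hf as [_ [Hd _]].
  destruct f as [s []]; unfold lamof; simpl.
  - rewrite (cod2_id2 L), (dd_id0 _ (dd0_ok d)), (dd_id0 _ (dd1_ok d)), (dd_agree d); reflexivity.
  - apply (proj2 (Hd s)).
  - rewrite (cod2_id2 L), (dd_id1 _ (dd0_ok d)), (dd_id1 _ (dd1_ok d)), (dd_agree d); reflexivity.
Qed.

Lemma lam_icon : is_icon (tfcomp (qof e) (LDfun (dd1 d))) (tfcomp (qof e) (LDfun (dd0 d)))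
  (lamof d e e2).
Proof.
  pose proof Hf as [[e1 [e2' [e3 e4]]] [Hd _]].
  repeat split.
  - intros x; simpl; rewrite (dd_agree d); reflexivity.
  - intros f; apply lam_dom.
  - intros f; apply lam_cod.
  - intros [s []]; reflexivity.
  - intros [t g] [s f] E. simpl in E. injection E; intros E2 E1; subst.
    destruct g, f; unfold lamof; simpl in *; try discriminate.
    + rewrite (dd_id0 _ (dd1_ok d)), e3.
      pose proof (hcomp_idl L (id2 (id1 (fo e (fo (dd1 d) (t, false)))))) as V.
      rewrite (dom2_id2 L), (cod1_id1 L) in V. symmetry; exact V.
    + rewrite (dd_id0 _ (dd1_ok d)), e3.
      replace (fo e (fo (dd1 d) (t, false))) with (dom1 (dom2 (e2 t))).
      * symmetry; apply (hcomp_idr L).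
      * rewrite (proj1 (Hd t)). unfold sder. rewrite e1, (proj1 (dd1_ok d)). reflexivity.
    + rewrite (dd_id1 _ (dd1_ok d)), e3.
      replace (fo e (fo (dd1 d) (t, true))) with (cod1 (dom2 (e2 t))).
      * symmetry; apply (hcomp_idl L).
      * rewrite (proj1 (Hd t)). unfold sder. rewrite e2', (proj1 (proj2 (dd1_ok d))). reflexivity.
    + rewrite (dd_id1 _ (dd1_ok d)), e3.
      pose proof (hcomp_idl L (id2 (id1 (fo e (fo (dd1 d) (t, true)))))) as V.
      rewrite (dom2_id2 L), (cod1_id1 L) in V. symmetry; exact V.
  - intros s.
    change (vcomp (id2 (fa e (fa (dd0 d) s))) (lamof d e e2 s) =
            vcomp (lamof d e e2 s) (id2 (fa e (fa (dd1 d) s)))).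
    rewrite <- (lam_cod s), <- (lam_dom s), (vcomp_idl L), (vcomp_idr L). reflexivity.
Qed.

End Part1.

Lemma part1 (d : DerScheme) (L : TwoCat) (e : FunData (dC d) (U L)) (e2 : dS d -> Cell L) :
  is_free d L e e2 ->
  is_coinserter (LDfun (dd1 d)) (LDfun (dd0 d)) L (qof e) (lamof d e e2).
Proof.
  intros Hf. split; [exact (q_2f d L e e2 Hf)|]. split; [exact (lam_icon d L e e2 Hf)|].
  pose proof Hf as [He [Hd Hu]].
  pose proof He as [e1 [e2' [e3 e4]]]. simpl in e1, e2', e3, e4.
  intros X. split.
  -
    intros r rho Hr Hrho.
    pose proof Hr as (r1&r2&r3&r4&r5&r6&r7&r8&r9).
    pose proof Hrho as (i1&i2&i3&i4&i5&i6).
    set (G1 := Build_FunData (dC d) (U X) (F0 r) (F1 r)).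
    assert (HG1 : is_functor G1).
    { repeat split; simpl; intros.
      - apply r1. - apply r2. - apply r5. - apply r6; assumption. }
    destruct (Hu X G1 (fun al => rho (al, a01)) HG1) as [H [hH [Hc [H2 Hun]]]].
    { intros al; split; [apply i2 | apply i3]. }
    pose proof hH as (h1&h2&h3&h4&h5&h6&h7&h8&h9).
    exists H. split; [exact hH|]. split; [|split].
    + apply tfd_ext.
      * intros x. exact (fo_eq Hc x).
      * intros f. exact (fa_eq Hc f).
      * intros f. simpl. rewrite h7. pose proof (fa_eq Hc f) as V. simpl in V. rewrite V.
        symmetry. exact (r7 f).
    + intros [s []]; unfold lamof; simpl.
      * rewrite h7. pose proof (fa_eq Hc (fa (dd1 d) (s, a00))) as V. simpl in V. rewrite V.
        pose proof (i4 (s, false)) as W. simpl in W. rewrite W. reflexivity.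
      * apply H2.
      * rewrite h7. pose proof (fa_eq Hc (fa (dd1 d) (s, a11))) as V. simpl in V. rewrite V.
        pose proof (i4 (s, true)) as W. simpl in W. rewrite W. reflexivity.
    + intros H' hH' Hq' Hl'. apply Hun; auto.
      * apply fd_ext.
        -- intros x. unfold G1; simpl; rewrite <- Hq'; reflexivity.
        -- intros f. unfold G1; simpl; rewrite <- Hq'; reflexivity.
      * intros al. exact (Hl' (al, a01)).
  - intros H H' hH hH'. split.
    + intros t1 t2 I1 I2 Hag f.
      assert (EQ : liftI L X H H' t1 hH hH' I1 = liftI L X H H' t2 hH hH' I2).
      { apply (free_unique d L e e2 Hf (Icn X)).
        - apply liftI_2f. - apply liftI_2f.
        - apply fd_ext; intros; simpl; [reflexivity | apply Hag].
        - intros al. apply icell_eq; simpl.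
          + rewrite (proj1 (Hd al)). apply Hag.
          + rewrite (proj2 (Hd al)). apply Hag.
          + reflexivity. + reflexivity. }
      exact (f_equal (fun K => F1 K f) EQ).
    + intros t' It' Hsq.
      pose proof hH as (h1&h2&h3&h4&h5&h6&h7&h8&h9).
      pose proof hH' as (k1&k2&k3&k4&k5&k6&k7&k8&k9).
      pose proof It' as (i1&i2&i3&i4&i5&i6). simpl in i1, i2, i3, i4.
      set (G1 := Build_FunData (dC d) (U (Icn X)) (fun x => F0 H (fo e x)) t').
      assert (HG1 : is_functor G1).
      { repeat split; simpl; intros.
        - rewrite i2, h1, e1; reflexivity.
        - rewrite i2, h2, e2'; reflexivity.
        - rewrite i4, e3, h5; reflexivity.
        - apply i5; assumption. }
      assert (p1 : forall al, dom2 (F2 H (e2 al)) = dom2 (t' (sder d al))).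
      { intros al; rewrite h3, (proj1 (Hd al)), i2; reflexivity. }
      assert (p2 : forall al, cod2 (F2 H (e2 al)) = dom2 (t' (tder d al))).
      { intros al; rewrite h4, (proj2 (Hd al)), i2; reflexivity. }
      assert (p3 : forall al, dom2 (F2 H' (e2 al)) = cod2 (t' (sder d al))).
      { intros al; rewrite k3, (proj1 (Hd al)), i3; reflexivity. }
      assert (p4 : forall al, cod2 (F2 H' (e2 al)) = cod2 (t' (tder d al))).
      { intros al; rewrite k4, (proj2 (Hd al)), i3; reflexivity. }
      assert (p5 : forall al, vcomp (F2 H' (e2 al)) (t' (sder d al)) =
                              vcomp (t' (tder d al)) (F2 H (e2 al))).
      { intros al. exact (Hsq (al, a01)). }
      set (G2 := fun al => mkI X (t' (sder d al)) (t' (tder d al)) (F2 H (e2 al)) (F2 H' (e2 al))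
                   (p1 al) (p2 al) (p3 al) (p4 al) (p5 al)).
      destruct (Hu (Icn X) G1 G2 HG1) as [K [hK [Kc [K2 _]]]].
      { intros al; split; reflexivity. }
      pose proof hK as (q1&q2&q3&q4&q5&q6&q7&q8&q9).
      assert (EH : tfcomp (DI X) K = H).
      { apply (free_unique d L e e2 Hf X).
        - apply twofunctor_comp; [exact hK | apply DI_2f]. - exact hH.
        - apply fd_ext; intros; simpl.
          + exact (fo_eq Kc x).
          + pose proof (fa_eq Kc f) as V; simpl in V; rewrite V. apply i2.
        - intros al. simpl. rewrite K2. reflexivity. }
      assert (EH' : tfcomp (DI' X) K = H').
      { apply (free_unique d L e e2 Hf X).
        - apply twofunctor_comp; [exact hK | apply DI'_2f]. - exact hH'.
        - apply fd_ext; intros; simpl.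
          + pose proof (fo_eq Kc x) as V; simpl in V; rewrite V. apply i1.
          + pose proof (fa_eq Kc f) as V; simpl in V; rewrite V. apply i3.
        - intros al. simpl. rewrite K2. reflexivity. }
      assert (EH0 : forall x, F0 H x = F0 K x) by (intros; rewrite <- EH; reflexivity).
      assert (EH1 : forall f, F1 H f = dom2 (F1 K f)) by (intros; rewrite <- EH; reflexivity).
      assert (EH2 : forall s, F2 H s = icl (F2 K s)) by (intros; rewrite <- EH; reflexivity).
      assert (EH0' : forall x, F0 H' x = F0 K x) by (intros; rewrite <- EH'; reflexivity).
      assert (EH1' : forall f, F1 H' f = cod2 (F1 K f)) by (intros; rewrite <- EH'; reflexivity).
      assert (EH2' : forall s, F2 H' s = icr (F2 K s)) by (intros; rewrite <- EH'; reflexivity).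
      exists (F1 K). split.
      * repeat split.
        -- intros x; rewrite EH0, EH0'; reflexivity.
        -- intros f; rewrite EH1; reflexivity.
        -- intros f; rewrite EH1'; reflexivity.
        -- intros x. rewrite q5, h5, EH0; reflexivity.
        -- intros g f E. apply q6; exact E.
        -- intros s. rewrite EH2, EH2', <- q3, <- q4. apply ic_sq.
      * intros g. exact (fa_eq Kc g).
Qed.

Theorem mainTheorem1 :
  (forall (d : DerScheme) (L : TwoCat) (e : FunData (dC d) (U L)) (e2 : dS d -> Cell L),
      is_free d L e e2 ->
      is_coinserter (LDfun (dd1 d)) (LDfun (dd0 d)) L (qof e) (lamof d e e2)) /\
  (forall (d d' : DerScheme) (L L' : TwoCat)
          (e : FunData (dC d) (U L)) (e2 : dS d -> Cell L)
          (e' : FunData (dC d') (U L')) (e2' : dS d' -> Cell L')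
          (h : FunData (dC d) (dC d')) (k : dS d -> dS d'),
      is_free d L e e2 -> is_free d' L' e' e2' -> is_scheme_mor d d' h k ->
      exists G : TwoFunData L L', is_2functor G /\ is_over e e2 e' e2' G h k /\
        (forall G' : TwoFunData L L', is_2functor G' -> is_over e e2 e' e2' G' h k ->
            G' = G)) /\
  (forall (d : DerScheme) (L : TwoCat) (e : FunData (dC d) (U L)) (e2 : dS d -> Cell L),
      is_free d L e e2 ->
      is_2functor (tfid L) /\ is_over e e2 e e2 (tfid L) (fid (dC d)) (fun al => al)) /\
  (forall (d d' d'' : DerScheme) (L L' L'' : TwoCat)
          (e : FunData (dC d) (U L)) (e2 : dS d -> Cell L)
          (e' : FunData (dC d') (U L')) (e2' : dS d' -> Cell L')
          (e'' : FunData (dC d'') (U L'')) (e2'' : dS d'' -> Cell L'')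
          (h : FunData (dC d) (dC d')) (k : dS d -> dS d')
          (h' : FunData (dC d') (dC d'')) (k' : dS d' -> dS d'')
          (G : TwoFunData L L') (G' : TwoFunData L' L''),
      is_free d L e e2 -> is_free d' L' e' e2' -> is_free d'' L'' e'' e2'' ->
      is_scheme_mor d d' h k -> is_scheme_mor d' d'' h' k' ->
      is_2functor G -> is_over e e2 e' e2' G h k ->
      is_2functor G' -> is_over e' e2' e'' e2'' G' h' k' ->
      is_2functor (tfcomp G' G) /\
      is_over e e2 e'' e2'' (tfcomp G' G) (fcomp h' h) (fun al => k' (k al))).
Proof.
  split; [exact part1|]. split; [|split].
  - intros d d' L L' e e2 e' e2' h k Hf Hf' [hh [E0 E1]].
    destruct Hf as [He [Hd Hu]]. destruct Hf' as [He' [Hd' Hu']].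
    destruct (Hu L' (fcomp e' h) (fun al => e2' (k al))) as [G [hG [Gc [G2 Gu]]]].
    + apply functor_comp; assumption.
    + intros al. rewrite (proj1 (Hd' (k al))), (proj2 (Hd' (k al))).
      unfold sder, tder. simpl.
      pose proof (fa_eq E1 (al, a01)) as V1; pose proof (fa_eq E0 (al, a01)) as V0.
      simpl in V0, V1. rewrite V0, V1. split; reflexivity.
    + exists G. split; [exact hG|]. split; [split; assumption|].
      intros G' hG' [o1 o2]. apply Gu; assumption.
  - intros d L e e2 _. split.
    + repeat split; intros; reflexivity.
    + split; [reflexivity | intros; reflexivity].
  - intros d d' d'' L L' L'' e e2 e' e2' e'' e2'' h k h' k' G G' _ _ _ _ _ hG [o1 o2] hG' [o1' o2'].
    split; [apply twofunctor_comp; assumption|]. split.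
    + apply fd_ext; intros; simpl.
      * pose proof (fo_eq o1 x) as A; simpl in A. rewrite A.
        pose proof (fo_eq o1' (fo h x)) as B; simpl in B. exact B.
      * pose proof (fa_eq o1 f) as A; simpl in A. rewrite A.
        pose proof (fa_eq o1' (fa h f)) as B; simpl in B. exact B.
    + intros al. simpl. rewrite o2, o2'. reflexivity.
Qed.
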